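(* Let $G=(V_G,E_G)$ be a graph with $N$ vertices such that $\frac{\mathcal{E}(N)}{N}\ge\frac{\mathcal{E}(n)}{n}$ for all $0<n<N$, let $g\ge0$ and $H$ the transverse-field Ising Hamiltonian on $G$. Then $\min_{0\le n<N}\frac{\mathcal{E}(N)-\mathcal{E}(n)}{N-n}=\frac{\mathcal{E}(N)}{N}$, and $$\min_{|\varphi\rangle\text{ stabilizer state}}\langle\varphi|H|\varphi\rangle=\begin{cases}-\mathcal{E}(N)&\text{if } g\le \mathcal{E}(N)/N,\\ -gN&\text{if } g\ge \mathcal{E}(N)/N.\end{cases}$$
   Context: A graph $G=(V_G,E_G)$ is finite, simple and undirected, with $V_G=\{q_0,\dots,q_{N-1}\}$, vertex $q_i$ corresponding to qubit $i$. For $S\subseteq V_G$, $E(S)$ is the set of edges with both endpoints in $S$. The edge-function is $\mathcal{E}(n)=\max\{|E(S)|: S\subseteq V_G,\ |S|\le n\}$ (so $\mathcal{E}(N)=|E_G|$). The transverse-field Ising Hamiltonian on $G$ is $H=-\sum_{\langle q_i,q_j\rangle\in E_G}Z_iZ_j-g\sum_{q_i\in V_G}X_i$; stabilizer states are $N$-qubit states whose stabilizer group consists of $2^N$ Pauli-group elements. *)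

(* Defs.v *)
From HB Require Import structures.
From mathcomp Require Import all_boot all_order all_algebra.
From mathcomp Require Import complex reals.
Set Implicit Arguments. Unset Strict Implicit. Unset Printing Implicit Defensive.
Import Order.TTheory GRing.Theory Num.Theory.
Local Open Scope ring_scope.

Definition simple_graph (N : nat) (e : rel 'I_N) : Prop :=
  (forall i j, e i j = e j i) /\ (forall i, ~~ e i i).

(* The edge set, each unordered edge {i,j} represented once as (i,j) with i<j. *)
Definition edges (N : nat) (e : rel 'I_N) : {set 'I_N * 'I_N} :=
  [set p : 'I_N * 'I_N | (p.1 < p.2)%N && e p.1 p.2].

Definition edges_in (N : nat) (e : rel 'I_N) (S : {set 'I_N}) : {set 'I_N * 'I_N} :=
  [set p : 'I_N * 'I_N in edges e | (p.1 \in S) && (p.2 \in S)].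

Definition edgefun (N : nat) (e : rel 'I_N) (n : nat) : nat :=
  \max_(S : {set 'I_N} | (#|S| <= n)%N) #|edges_in e S|.

Definition bits (N : nat) := {ffun 'I_N -> bool}.

(* State vectors in (C^2)^{(x)N}, as amplitude functions on the basis. *)
Definition qstate (R : realType) (N : nat) := {ffun bits N -> R[i]}.

Definition bxor (N : nat) (c x : bits N) : bits N := [ffun k => c k (+) x k].
Definition bdot (N : nat) (z b : bits N) : nat := (\sum_k (z k && b k))%N.

(* Pauli-group elements  i^k X^x Z^z  (k : 'I_4, x z : bit strings);
   every element of the N-qubit Pauli group has exactly one such form. *)
Definition pauli (N : nat) := ('I_4 * bits N * bits N)%type.

Definition pauli_act (R : realType) (N : nat) (P : pauli N) (phi : qstate R N)
  : qstate R N :=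
  let: (k, x, z) := P in
  [ffun c => ('i : R[i]) ^+ k * (-1) ^+ (bdot z (bxor c x)) * phi (bxor c x)].

Definition unit_bits (N : nat) (j : 'I_N) : bits N := [ffun k => k == j].

Definition Xop (R : realType) (N : nat) (j : 'I_N) (phi : qstate R N) : qstate R N :=
  pauli_act (ord0, unit_bits j, [ffun _ => false]) phi.
Definition Zop (R : realType) (N : nat) (j : 'I_N) (phi : qstate R N) : qstate R N :=
  pauli_act (ord0, [ffun _ => false], unit_bits j) phi.

Definition inner (R : realType) (N : nat) (phi psi : qstate R N) : R[i] :=
  \sum_b ((phi b)^* * psi b)%C.

Definition stab_group (R : realType) (N : nat) (phi : qstate R N) : {set pauli N} :=
  [set P | pauli_act P phi == phi].

Definition stabilizer_state (R : realType) (N : nat) (phi : qstate R N) : Prop :=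
  inner phi phi = 1 /\ #|stab_group phi| = (2 ^ N)%N.

Definition ising_H (R : realType) (N : nat) (e : rel 'I_N) (g : R)
  (phi : qstate R N) : qstate R N :=
  - (\sum_(p in edges e) Zop p.1 (Zop p.2 phi)) - (g%:C)%C *: \sum_j Xop j phi.

Definition energy (R : realType) (N : nat) (e : rel 'I_N) (g : R) (phi : qstate R N)
  : R[i] := inner phi (ising_H e g phi).

Definition is_min_stab_energy (R : realType) (N : nat) (e : rel 'I_N) (g v : R)
  : Prop :=
  (exists2 phi : qstate R N, stabilizer_state phi & energy e g phi = (v%:C)%C) /\
  (forall phi : qstate R N, stabilizer_state phi -> ((v%:C)%C <= energy e g phi)).

(* Main.v *)
Require Import Defs.
From HB Require Import structures.
From mathcomp Require Import all_boot all_order all_algebra.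
From mathcomp Require Import complex reals.
From mathcomp Require Import ring lra zify.
Set Implicit Arguments. Unset Strict Implicit. Unset Printing Implicit Defensive.
Import Order.TTheory GRing.Theory Num.Theory.
Local Open Scope ring_scope.
Local Open Scope complex_scope.
Section Bits.
Variable N : nat.
Implicit Types c x y z w : bits N.
Definition bzero : bits N := [ffun => false].

Lemma bxorK c x : bxor (bxor c x) x = c.
Proof. by apply/ffunP=> k; rewrite !ffunE addbK. Qed.
Lemma bxor0 c : bxor c bzero = c.
Proof. by apply/ffunP=> k; rewrite !ffunE addbF. Qed.
Lemma bxorC c x : bxor c x = bxor x c.
Proof. by apply/ffunP=> k; rewrite !ffunE addbC. Qed.
Lemma bxorxx c : bxor c c = bzero.
Proof. by apply/ffunP=> k; rewrite !ffunE addbb. Qed.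
Lemma bxor_inj x : injective (fun c => bxor c x).
Proof. by apply: (can_inj (g := fun c => bxor c x)) => c; exact: bxorK. Qed.
Lemma sum_bxor (V : nmodType) (F : bits N -> V) x :
  \sum_c F (bxor c x) = \sum_c F c.
Proof. by rewrite [RHS](reindex_inj (@bxor_inj x)). Qed.

Lemma odd_sum_bool (I : finType) (F : I -> bool) :
  odd (\sum_i (F i : nat)) = \big[addb/false]_i F i.
Proof.
rewrite (big_morph odd (id1 := false) (op1 := addb)) //; last exact: oddD.
by apply: eq_bigr => i _; case: (F i).
Qed.

Lemma odd_bdot_xorl y w c : odd (bdot (bxor y w) c) = odd (bdot y c) (+) odd (bdot w c).
Proof.
rewrite /bdot !odd_sum_bool -big_split /=; apply: eq_bigr => k _.
by rewrite ffunE; case: (y k); case: (w k); case: (c k).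
Qed.
Lemma bdotC z c : bdot z c = bdot c z.
Proof. by apply: eq_bigr => k _; rewrite andbC. Qed.
Lemma odd_bdot_xorr z c x : odd (bdot z (bxor c x)) = odd (bdot z c) (+) odd (bdot z x).
Proof. by rewrite bdotC odd_bdot_xorl !(bdotC z). Qed.
Lemma bdot0l c : bdot bzero c = 0%N.
Proof. by rewrite /bdot big1 // => k _; rewrite ffunE. Qed.
Lemma bdot0r c : bdot c bzero = 0%N.
Proof. by rewrite bdotC bdot0l. Qed.
Lemma bdot_unit j c : bdot (unit_bits j) c = c j.
Proof.
rewrite /bdot (bigD1 j) //= big1 ?addn0; first by rewrite ffunE eqxx.
by move=> k /negbTE kj; rewrite ffunE kj.
Qed.
Lemma card_bits : #|{: bits N}| = (2 ^ N)%N.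
Proof. by rewrite card_ffun card_bool card_ord. Qed.
End Bits.
Section Q.
Variable R : realType.
Variable N : nat.
Implicit Types c x y z w : bits N.
Implicit Types phi psi : qstate R N.
Local Notation C := R[i].

Lemma pauli_act0E x z phi :
  pauli_act (ord0, x, z) phi = [ffun c => (-1) ^+ (bdot z (bxor c x)) * phi (bxor c x)].
Proof. by apply/ffunP=> c; rewrite !ffunE expr0 mul1r. Qed.

Lemma pauli_actkE k x z phi :
  pauli_act (k, x, z) phi = ('i ^+ k) *: pauli_act (ord0, x, z) phi.
Proof. by apply/ffunP=> c; rewrite !ffunE expr0 mul1r; exact: (esym (mulrA _ _ _)). Qed.

Lemma XopE j phi : Xop j phi = [ffun c => phi (bxor c (unit_bits j))].
Proof. by apply/ffunP=> c; rewrite /Xop pauli_act0E !ffunE bdot0l mul1r. Qed.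

Lemma ZopE j phi : Zop j phi = [ffun c : bits N => (-1) ^+ (c j) * phi c].
Proof.
apply/ffunP=> c; rewrite /Zop pauli_act0E !ffunE -/(bzero N) bxor0 bdot_unit //.
Qed.

Lemma innerZ a phi psi : inner phi (a *: psi) = a * inner phi psi.
Proof. by rewrite /inner mulr_sumr; apply: eq_bigr => b _; rewrite ffunE mulrCA. Qed.
Lemma innerD phi psi1 psi2 : inner phi (psi1 + psi2) = inner phi psi1 + inner phi psi2.
Proof. by rewrite /inner -big_split; apply: eq_bigr => b _; rewrite ffunE mulrDr. Qed.
Lemma innerN phi psi : inner phi (- psi) = - inner phi psi.
Proof. by rewrite /inner -sumrN; apply: eq_bigr => b _; rewrite ffunE mulrN. Qed.
Lemma inner_sum phi (I : finType) (P : pred I) (F : I -> qstate R N) :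
  inner phi (\sum_(i | P i) F i) = \sum_(i | P i) inner phi (F i).
Proof.
rewrite /inner exchange_big /=; apply: eq_bigr => b _.
by rewrite sum_ffunE mulr_sumr.
Qed.

Lemma conjM (a b : C) : conjc (a * b) = (conjc a) * (conjc b).
Proof. exact: rmorphM. Qed.
Lemma conjKK (a : C) : (conjc (conjc a)) = a.
Proof. by case: a => a b; rewrite /conjc opprK. Qed.
Lemma conj_sum (I : finType) (F : I -> C) : (conjc (\sum_i F i)) = \sum_i (conjc (F i)).
Proof. exact: rmorph_sum. Qed.
Lemma conj_sign n : (conjc ((-1) ^+ n : C)) = (-1) ^+ n.
Proof. by rewrite rmorphXn rmorphN1. Qed.

Lemma sign_addb (a b : bool) : ((-1) ^+ (a (+) b) : C) = (-1) ^+ a * (-1) ^+ b.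
Proof. by case: a; case: b; rewrite /= ?expr0 ?expr1 ?mulr1 ?mul1r ?mulrNN ?mulr1. Qed.

Lemma sign_bdot_xorl y w c :
  ((-1) ^+ (bdot (bxor y w) c) : C) = (-1) ^+ (bdot y c) * (-1) ^+ (bdot w c).
Proof. by rewrite -signr_odd odd_bdot_xorl sign_addb !signr_odd. Qed.

Lemma char_sum w :
  \sum_z ((-1) ^+ (bdot z w) : C) = (w == bzero N)%:R * (2 ^ N)%:R.
Proof.
have [->|] := eqVneq w (bzero N).
  rewrite mul1r (eq_bigr (fun _ => 1)); last by move=> z _; rewrite bdot0r.
  by rewrite sumr_const card_bits.
move=> wn0; rewrite mul0r.
have [j wj] : exists j, w j.
  apply/existsP; apply: contraNT wn0; rewrite negb_exists => /forallP H.
  by apply/eqP/ffunP=> k; rewrite ffunE; apply/negbTE/H.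
set S := \sum_z _.
have : S = - S.
  rewrite {1}/S -(sum_bxor _ (unit_bits j)) -sumrN; apply: eq_bigr => z _.
  by rewrite sign_bdot_xorl bdot_unit wj expr1 mulrN1.
move/eqP; rewrite -subr_eq0 opprK -mulr2n mulrn_eq0 /= => /eqP //.
Qed.
Definition Tc phi x z := inner phi (pauli_act (ord0, x, z) phi).

Lemma TcE phi x z :
  Tc phi x z = \sum_d ((conjc (phi (bxor d x))) * phi d) * (-1) ^+ (bdot z d).
Proof.
rewrite /Tc /inner -[LHS](sum_bxor _ x); apply: eq_bigr => d _.
rewrite pauli_act0E ffunE bxorK; ring.
Qed.

Lemma bxor_eq0 d d' : (bxor d d' == bzero N) = (d == d').
Proof.
apply/eqP/eqP => [H|->]; last exact: bxorxx.
by rewrite -(bxorK d d') H bxorC bxor0.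
Qed.

Lemma sum_z_TT phi x :
  \sum_z Tc phi x z * (conjc (Tc phi x z)) =
  (2 ^ N)%:R * \sum_d ((conjc (phi (bxor d x))) * phi d) * (conjc ((conjc (phi (bxor d x))) * phi d)).
Proof.
set h := fun d => (conjc (phi (bxor d x))) * phi d.
have E z : Tc phi x z * (conjc (Tc phi x z)) =
    \sum_d \sum_d' h d * (conjc (h d')) * ((-1) ^+ (bdot z (bxor d d'))).
  rewrite TcE conj_sum mulr_suml; apply: eq_bigr => d _.
  rewrite mulr_sumr; apply: eq_bigr => d' _.
  rewrite conjM conj_sign [bdot z (bxor _ _)]bdotC sign_bdot_xorl !(bdotC _ z).
  rewrite /h; ring.
rewrite (eq_bigr _ (fun z _ => E z)) exchange_big mulr_sumr; apply: eq_bigr => d _.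
rewrite exchange_big (bigD1 d) //= [X in _ + X]big1 ?addr0.
  by rewrite -mulr_sumr char_sum bxorxx eqxx mul1r mulrC.
move=> d' /negbTE dd'; rewrite -mulr_sumr char_sum bxor_eq0 eq_sym dd'.
by rewrite mul0r mulr0.
Qed.

Lemma parseval phi :
  \sum_x \sum_z Tc phi x z * (conjc (Tc phi x z)) = (2 ^ N)%:R * (inner phi phi) ^+ 2.
Proof.
rewrite (eq_bigr _ (fun x _ => sum_z_TT phi x)) -mulr_sumr; congr (_ * _).
rewrite exchange_big expr2 /inner mulr_suml; apply: eq_bigr => d _.
rewrite mulr_sumr -(sum_bxor _ d); apply: eq_bigr => x _.
rewrite bxorC bxorK conjM conjKK; ring.
Qed.
Lemma iconj : ('i%C : C) * conjc 'i%C = 1.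
Proof. by apply/eqP; rewrite eq_complex /= !(mul0r, mulr0, mul1r, sub0r, opprK, addr0) !eqxx. Qed.

Lemma ipow_conj (k : nat) : ('i%C : C) ^+ k * conjc ('i%C ^+ k) = 1.
Proof. by rewrite (rmorphXn conjc) -exprMn iconj expr1n. Qed.

Lemma ipow_inj (k1 k2 : 'I_4) : ('i%C : C) ^+ k1 = 'i%C ^+ k2 -> k1 = k2.
Proof.
have E : forall k : 'I_4, ('i%C : C) ^+ k =
   Complex ([:: 1; 0; -1; 0]`_k) ([:: 0; 1; 0; -1]`_k).
  case=> [[|[|[|[|k]]]]] hk //=; rewrite ?exprS ?expr0 ?mulr1;
  by apply/eqP; rewrite eq_complex; apply/andP; split; apply/eqP => /=; ring.
rewrite !E => -[].
case: k1 => [[|[|[|[|k]]]]] hk1 //=; case: k2 => [[|[|[|[|k']]]]] hk2 //= H1 H2;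
  try (by apply: val_inj); exfalso; lra.
Qed.
Lemma conj1 : conjc (1 : C) = 1.
Proof. exact: rmorph1. Qed.

Lemma inner_nz phi : inner phi phi = 1 -> exists b, phi b != 0.
Proof.
move=> H; apply/existsP; apply: contraT; rewrite negb_exists => /forallP H0.
move: H; rewrite /inner big1 => [/eqP|b _]; first by rewrite eq_sym oner_eq0.
by move/negPn/eqP: (H0 b) => ->; rewrite mulr0.
Qed.

Lemma key phi : stabilizer_state phi -> forall x z, Tc phi x z != 0 ->
  exists k : 'I_4, pauli_act (k, x, z) phi = phi.
Proof.
move=> [Hn Hc] x z HT.
case: (boolP [exists k : 'I_4, pauli_act (k, x, z) phi == phi]) => [/existsP [k /eqP] | Hno].
  by exists k.
exfalso.
set S := stab_group phi.
pose f := fun P : pauli N => (P.1.2, P.2).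
have Hq k x' z' : (k, x', z') \in S -> ('i%C ^+ k) *: pauli_act (ord0, x', z') phi = phi.
  by rewrite inE -pauli_actkE => /eqP.
have finj : {in S &, injective f}.
  move=> [[k1 x1] z1] [[k2 x2] z2] H1 H2 /= [ex ez]; subst x2 z2.
  have E1 := Hq _ _ _ H1; have E2 := Hq _ _ _ H2.
  have [b hb] := inner_nz Hn.
  have := congr1 (fun v : qstate R N => v b) (etrans E1 (esym E2)); rewrite /= [LHS]ffunE [RHS]ffunE.
  have Qb : pauli_act (ord0, x1, z1) phi b != 0.
    apply: contra hb => /eqP Q0; have := congr1 (fun v : qstate R N => v b) E1; rewrite /= ffunE Q0 scaler0 => <- //.
  by move=> H; congr (_, _, _); apply: ipow_inj; apply: (mulIf Qb); exact: H.
have cardI : #|f @: S| = (2 ^ N)%N by rewrite card_in_imset.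
have w1 p : p \in f @: S -> Tc phi p.1 p.2 * conjc (Tc phi p.1 p.2) = 1.
  move=> /imsetP [[[k x'] z'] HP ->] /=.
  have E := Hq _ _ _ HP.
  have H : 'i%C ^+ k * Tc phi x' z' = 1 by rewrite /Tc -innerZ E Hn.
  have ET : Tc phi x' z' = conjc ('i%C ^+ k).
    by rewrite -[RHS]mulr1 -H mulrA (mulrC (conjc _)) ipow_conj mul1r.
  by rewrite ET conjKK mulrC ipow_conj.
have P := parseval phi; rewrite Hn expr1n mulr1 pair_big /= in P.
rewrite (bigID (mem (f @: S))) /= in P.
rewrite (eq_bigr (fun _ => 1)) ?sumr_const ?cardI in P; last by move=> p; exact: w1.
have P0 : \sum_(p | p \notin f @: S) Tc phi p.1 p.2 * conjc (Tc phi p.1 p.2) = 0.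
  by apply: (@addrI _ ((2 ^ N)%:R)); rewrite addr0.
have nI : (x, z) \notin f @: S.
  apply/imsetP => -[[[k x'] z'] HP [ex ez]]; subst x' z'.
  by move/existsP: Hno; apply; exists k; rewrite inE in HP.
have := psumr_eq0P (fun p _ => mulcJ_ge0 _) P0 nI; rewrite /=.
by move/eqP; rewrite mulf_eq0 conjc_eq0 orbb (negbTE HT).
Qed.
Lemma scaleC (a b : C) : a *: b = a * b.
Proof. by []. Qed.

Definition ZZ (p q : 'I_N) (phi : qstate R N) := Zop p (Zop q phi).

Lemma ZZ_pauli p q phi : ZZ p q phi = pauli_act (ord0, bzero N, bxor (unit_bits p) (unit_bits q)) phi.
Proof.
apply/ffunP=> c; rewrite /ZZ pauli_act0E !ZopE !ffunE bxor0 sign_bdot_xorl !bdot_unit.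
by rewrite mulrA.
Qed.
Lemma X_pauli j phi : Xop j phi = pauli_act (ord0, unit_bits j, bzero N) phi.
Proof. by []. Qed.

Lemma XX j phi : Xop j (Xop j phi) = phi.
Proof. by apply/ffunP=> c; rewrite !XopE !ffunE bxorK. Qed.
Lemma ZZZZ p q phi : ZZ p q (ZZ p q phi) = phi.
Proof.
apply/ffunP=> c; rewrite /ZZ !ZopE !ffunE.
by case: (c p); case: (c q); rewrite ?expr0 ?expr1 ?mul1r ?mulN1r ?opprK.
Qed.
Lemma XZ j phi a : Xop j (a *: phi) = a *: Xop j phi.
Proof. by apply/ffunP=> c; rewrite !XopE !ffunE. Qed.
Lemma ZZZ p q phi a : ZZ p q (a *: phi) = a *: ZZ p q phi.
Proof. apply/ffunP=> c; rewrite /ZZ !ZopE !ffunE !scaleC; ring. Qed.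
Lemma XZZanti j p q phi : p != q -> (j == p) || (j == q) ->
  Xop j (ZZ p q phi) = - ZZ p q (Xop j phi).
Proof.
move=> pq jpq; apply/ffunP=> c; rewrite /ZZ !XopE !ZopE !ffunE.
have qp : (q == p) = false by rewrite eq_sym (negbTE pq).
case/orP: jpq => /eqP ->; rewrite eqxx ?qp ?(negbTE pq) ?addbT ?addbF;
  by case: (c p); case: (c q); rewrite /= ?expr0 ?expr1; ring.
Qed.

Lemma obs phi (O : qstate R N -> qstate R N) x z : stabilizer_state phi ->
  (forall psi, O psi = pauli_act (ord0, x, z) psi) ->
  (forall psi, O (O psi) = psi) -> (forall a psi, O (a *: psi) = a *: O psi) ->
  inner phi (O phi) = 0 \/
  ((inner phi (O phi) = 1 \/ inner phi (O phi) = -1) /\ O phi = inner phi (O phi) *: phi).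
Proof.
move=> Hs HO HOO HOZ.
have [->|nz] := eqVneq (inner phi (O phi)) 0; first by left.
right.
have [k Hk] : exists k : 'I_4, pauli_act (k, x, z) phi = phi.
  by apply: key => //; rewrite /Tc -HO.
have El : O phi = conjc ('i%C ^+ k) *: phi.
  rewrite -{2}Hk pauli_actkE scalerA mulrC ipow_conj scale1r HO //.
set l := conjc _ in El.
have [b hb] := inner_nz Hs.1.
have l2 : l ^+ 2 = 1.
  have := congr1 (fun v : qstate R N => v b) (HOO phi).
  rewrite El HOZ El scalerA /= ffunE => H.
  by apply: (mulIf hb); rewrite mul1r expr2; exact: H.
have Ei : inner phi (O phi) = l by rewrite El innerZ Hs.1 mulr1.
rewrite Ei; split; last exact: El.
by move/eqP: l2; rewrite sqrf_eq1 => /orP [] /eqP ->; [left|right].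
Qed.
Lemma obsX phi j : stabilizer_state phi ->
  inner phi (Xop j phi) = 0 \/
  ((inner phi (Xop j phi) = 1 \/ inner phi (Xop j phi) = -1) /\
   Xop j phi = inner phi (Xop j phi) *: phi).
Proof. by move=> Hs; apply: (obs (x := unit_bits j) (z := bzero N)) => // *; [exact: XX|exact: XZ]. Qed.

Lemma obsZ phi p q : stabilizer_state phi ->
  inner phi (ZZ p q phi) = 0 \/
  ((inner phi (ZZ p q phi) = 1 \/ inner phi (ZZ p q phi) = -1) /\
   ZZ p q phi = inner phi (ZZ p q phi) *: phi).
Proof.
move=> Hs; apply: (obs (x := bzero N) (z := bxor (unit_bits p) (unit_bits q))) => // *;
  [exact: ZZ_pauli|exact: ZZZZ|exact: ZZZ].
Qed.

Lemma excl phi j p q : stabilizer_state phi -> p != q -> (j == p) || (j == q) ->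
  inner phi (Xop j phi) != 0 -> inner phi (ZZ p q phi) = 0.
Proof.
move=> Hs pq jpq nz.
have [a [a1 Ea]] : exists a : C, (a = 1 \/ a = -1) /\ Xop j phi = a *: phi.
  case: (obsX j Hs) => [H|[H1 H2]]; first by rewrite H eqxx in nz.
  by exists (inner phi (Xop j phi)).
case: (obsZ p q Hs) => // -[].
move: (inner phi (ZZ p q phi)) => b b1 Eb; exfalso.
have H := XZZanti phi pq jpq; rewrite Eb XZ Ea ZZZ Eb !scalerA in H.
have [b0 hb] := inner_nz Hs.1.
have := congr1 (fun v : qstate R N => v b0) H; rewrite /= !ffunE !scaleC => H'.
have : (2%:R * (a * b)) * phi b0 = 0.
  by rewrite mulr_natl mulr2n !mulrDl {1}(mulrC a) H'; ring.
apply/eqP; rewrite !mulf_eq0 negb_or hb andbT pnatr_eq0 /= negb_or.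
by case: a1 => ->; case: b1 => ->; rewrite ?oppr_eq0 oner_eq0.
Qed.
Lemma energyE e g phi : energy e g phi =
  - \sum_(p in edges e) inner phi (ZZ p.1 p.2 phi) - g%:C * \sum_j inner phi (Xop j phi).
Proof. by rewrite /energy /ising_H innerD innerN innerN innerZ !inner_sum. Qed.

Lemma val3 (v : C) : v = 0 \/ (v = 1 \/ v = -1) -> v <= 1.
Proof. by case=> [->|[->|->]]; rewrite ?ler01 ?lexx //; exact: (le_trans (lerN10 _) ler01). Qed.
Lemma val3' (v : C) : v = 0 \/ (v = 1 \/ v = -1) -> v != 0 -> v <= 1.
Proof. by move=> /val3. Qed.

Lemma lower e g phi : 0 <= g -> stabilizer_state phi ->
  exists B : {set 'I_N},
   - (#|edges_in e B|%:R) - g%:C * (N - #|B|)%:R <= energy e g phi.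
Proof.
move=> g0 Hs.
pose A := [set j | inner phi (Xop j phi) != 0].
exists (~: A); rewrite energyE.
have cA : (N - #|~: A|)%N = #|A|.
  by have := cardsC A; rewrite card_ord; lia.
apply: lerB; last first.
  apply: ler_wpM2l; first by rewrite ler0c.
  rewrite cA -sumr_const (big_mkcond (mem A)) /=.
  apply: ler_sum => j _; rewrite inE; case: ifP => [nz|].
    case: (obsX j Hs) => [->|[H _]]; first by rewrite ler01.
    by apply: val3; right.
  by move/negbFE/eqP ->.
rewrite lerN2.
rewrite -sumr_const (big_mkcond (mem (edges_in e (~: A)))) /= [X in X <= _](big_mkcond (mem (edges e))) /=.
apply: ler_sum => p _; case: ifP => pE; last by case: ifP; rewrite ?ler01 ?lexx.
rewrite inE pE /=.
case: ifP => [_|]; first by apply: val3; case: (obsZ p.1 p.2 Hs) => [->|[H _]]; [left|right].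
move: pE; rewrite inE => /andP [lt12 _] /negbT; rewrite negb_and !inE !negbK => H.
have pq : p.1 != p.2 by rewrite neq_ltn lt12.
case/orP: H => H.
  by rewrite (excl Hs pq (j := p.1)) ?eqxx.
by rewrite (excl Hs pq (j := p.2)) ?eqxx ?orbT.
Qed.
Lemma conj_natr n : conjc (n%:R : C) = n%:R.
Proof. exact: rmorph_nat. Qed.
Lemma nconj_natr n : Num.conj (n%:R : C) = n%:R.
Proof. exact: conjC_nat. Qed.
Lemma nconj_realc (a : R) : Num.conj (a%:C : C) = a%:C.
Proof. by apply/eqP; rewrite eq_complex /= oppr0 !eqxx. Qed.
Lemma conj_realc (a : R) : conjc (a%:C : C) = a%:C.
Proof. by apply/eqP; rewrite eq_complex /= oppr0 !eqxx. Qed.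
Lemma i_neq0 : ('i%C : C) != 0.
Proof. by rewrite eq_complex /= oner_eq0 andbF. Qed.
Lemma ipow1 (k : 'I_4) : ('i%C : C) ^+ k = 1 -> k = ord0.
Proof. by move=> H; apply: ipow_inj; rewrite H expr0. Qed.

Definition phi0 : qstate R N := [ffun c => (c == bzero N)%:R].

Lemma inner_phi0 psi : inner phi0 psi = psi (bzero N).
Proof.
rewrite /inner (bigD1 (bzero N)) //= big1 ?addr0.
  by rewrite ffunE eqxx nconj_natr mul1r.
by move=> b /negbTE nb; rewrite ffunE nb nconj_natr mul0r.
Qed.

Lemma phi0_norm : inner phi0 phi0 = 1.
Proof. by rewrite inner_phi0 ffunE eqxx. Qed.

Lemma phi0_stab : #|stab_group phi0| = (2 ^ N)%N.
Proof.
have -> : stab_group phi0 = [set (ord0, bzero N, z) | z : bits N].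
  apply/setP => [[[k x] z]]; rewrite !inE.
  apply/eqP/imsetP => [H|[z' _ [-> -> ->]]].
    have Hx := congr1 (fun v : qstate R N => v x) H.
    rewrite /= !ffunE bxorxx eqxx mulr1 bdot0r expr0 mulr1 in Hx.
    have x0 : x = bzero N.
      apply/eqP; apply: contraTT (expf_neq0 k i_neq0) => /negbTE nx.
      by rewrite complexiE; apply/negPn/eqP; move: Hx; rewrite nx.
    subst x; rewrite eqxx in Hx.
    by exists z => //; rewrite (ipow1 Hx).
  apply/ffunP => c; rewrite pauli_act0E !ffunE bxor0.
  by case: eqP => [->|]; rewrite ?bdot0r ?expr0 ?mulr1 ?mulr0.
rewrite card_imset ?cardsT ?card_bits //.
by move=> z1 z2 [].
Qed.

Lemma phi0_energy e g : energy e g phi0 = - (#|edges e|%:R).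
Proof.
rewrite energyE (eq_bigr (fun _ => 1)); last first.
  by move=> p _; rewrite inner_phi0 /ZZ !ZopE !ffunE eqxx expr0 !mul1r.
rewrite [X in g%:C * X]big1 ?mulr0 ?subr0 ?sumr_const //.
move=> j _; rewrite inner_phi0 XopE !ffunE.
case: eqP => // /ffunP /(_ j); rewrite !ffunE eqxx //.
Qed.
Definition amp : R := Num.sqrt ((2 ^ N)%:R^-1).
Lemma amp2 : amp ^+ 2 = (2 ^ N)%:R^-1.
Proof. by rewrite sqr_sqrtr // invr_ge0 ler0n. Qed.
Lemma amp_neq0 : amp != 0.
Proof.
apply/eqP => H; have := amp2; rewrite H expr0n /= => /eqP; rewrite eq_sym invr_eq0.
by rewrite pnatr_eq0 expn_eq0.
Qed.

Definition phi1 : qstate R N := [ffun => amp%:C].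

Lemma amp_sum : \sum_(b : bits N) Num.conj (amp%:C : C) * amp%:C = 1.
Proof.
rewrite nconj_realc sumr_const card_bits -rmorphM /= -expr2 amp2.
rewrite -rmorphMn /= -mulr_natr mulVf ?rmorph1 //.
by rewrite pnatr_eq0 expn_eq0.
Qed.

Lemma phi1_norm : inner phi1 phi1 = 1.
Proof. by rewrite /inner -amp_sum; apply: eq_bigr => b _; rewrite !ffunE. Qed.

Lemma amp_C_neq0 : (amp%:C : C) != 0.
Proof. by rewrite eq_complex /= negb_and amp_neq0. Qed.

Lemma phi1_stab : #|stab_group phi1| = (2 ^ N)%N.
Proof.
have -> : stab_group phi1 = [set (ord0, x, bzero N) | x : bits N].
  apply/setP => [[[k x] z]]; rewrite !inE.
  apply/eqP/imsetP => [H|[x' _ [-> -> ->]]].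
    have Hx := congr1 (fun v : qstate R N => v x) H.
    rewrite /= !ffunE bxorxx bdot0r expr0 mulr1 in Hx.
    have k0 : k = ord0.
      apply: ipow1; apply: (mulIf amp_C_neq0); rewrite mul1r; exact: Hx.
    rewrite k0 in H Hx *.
    have z0 : z = bzero N.
      apply/ffunP => j; rewrite ffunE; apply/negP => zj.
      have := congr1 (fun v : qstate R N => v (bxor x (unit_bits j))) H.
      rewrite /= !ffunE (bxorC x) bxorK bdotC bdot_unit zj expr0 expr1 mul1r mulN1r => /eqP.
      by rewrite eq_sym -subr_eq0 opprK -mulr2n mulrn_eq0 /= (negbTE amp_C_neq0).
    by subst z; exists x.
  by apply/ffunP => c; rewrite pauli_act0E !ffunE bdot0l expr0 mul1r.
rewrite card_imset ?cardsT ?card_bits //.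
by move=> x1 x2 [].
Qed.
Lemma phi1_energy e g : energy e g phi1 = - (g%:C * N%:R).
Proof.
rewrite energyE big1; last first.
  move=> p; rewrite inE => /andP [lt12 _].
  rewrite ZZ_pauli /inner.
  rewrite (eq_bigr (fun b => Num.conj (amp%:C : C) * amp%:C *
       (-1) ^+ bdot b (bxor (unit_bits p.1) (unit_bits p.2)))); last first.
    by move=> b _; rewrite pauli_act0E !ffunE bxor0 bdotC; ring.
  rewrite -mulr_sumr char_sum bxor_eq0.
  case: eqP => [/ffunP /(_ p.1)|]; last by rewrite mul0r mulr0.
  by rewrite !ffunE eqxx => /esym/eqP E; rewrite E ltnn in lt12.
rewrite (eq_bigr (fun _ => 1)); last first.
  by move=> j _; rewrite /inner -amp_sum; apply: eq_bigr => b _; rewrite XopE !ffunE.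
by rewrite sumr_const card_ord oppr0 sub0r.
Qed.
End Q.
Section EF.
Variable N : nat.
Variable e : rel 'I_N.

Lemma edges_in_sub B : edges_in e B \subset edges e.
Proof. by apply/subsetP => p; rewrite inE => /andP []. Qed.

Lemma edgefun0 : edgefun e 0 = 0%N.
Proof.
apply/eqP; rewrite -leqn0; apply/bigmax_leqP => S; rewrite leqn0 cards_eq0 => /eqP ->.
rewrite leqn0 cards_eq0; apply/eqP/setP => p; rewrite !inE /=.
by rewrite andbF.
Qed.

Lemma edgefunN : edgefun e N = #|edges e|.
Proof.
apply/eqP; rewrite eqn_leq; apply/andP; split.
  by apply/bigmax_leqP => S _; apply: subset_leq_card; exact: edges_in_sub.
have -> : edges e = edges_in e setT.
  by apply/setP => p; rewrite !inE /= !andbT.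
by apply: (leq_bigmax_cond (P := fun S : {set 'I_N} => (#|S| <= N)%N)); rewrite cardsT card_ord.
Qed.

Lemma edgefun_ge B : (#|edges_in e B| <= edgefun e #|B|)%N.
Proof. exact: (leq_bigmax_cond (P := fun S : {set 'I_N} => (#|S| <= #|B|)%N)). Qed.

Lemma Em_bound (R : realType) : (0 < N)%N ->
  (forall n : nat, (0 < n)%N -> (n < N)%N ->
     (edgefun e n)%:R / n%:R <= (edgefun e N)%:R / N%:R :> R) ->
  forall m, (m <= N)%N -> (edgefun e m)%:R <= m%:R * ((edgefun e N)%:R / N%:R) :> R.
Proof.
move=> N0 H m mN.
have [->|m0] := posnP m; first by rewrite edgefun0 mul0r.
have [mN'|mN'] := ltnP m N.
  by rewrite mulrC -ler_pdivrMr ?ltr0n // H.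
have -> : m = N by apply/eqP; rewrite eqn_leq mN mN'.
by rewrite mulrC divfK // pnatr_eq0 -lt0n.
Qed.
End EF.
Section Fin.
Local Open Scope complex_scope.
Variable R : realType.
Variable N : nat.
Variable e : rel 'I_N.
Variable g : R.

Lemma lower_real phi : 0 <= g -> stabilizer_state phi ->
  exists m, (m <= N)%N /\
   (((- (edgefun e m)%:R - g * (N - m)%:R) : R)%:C <= energy e g phi).
Proof.
move=> g0 Hs; have [B HB] := lower e g0 Hs.
exists #|B|; split; first by have := max_card (mem B); rewrite card_ord.
apply: le_trans HB.
rewrite rmorphB rmorphN rmorphM /= !rmorph_nat lerB // lerN2 ler_nat.
exact: edgefun_ge.
Qed.

Lemma min_gen v (phiw : qstate R N) : 0 <= g -> stabilizer_state phiw ->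
  energy e g phiw = v%:C ->
  (forall m, (m <= N)%N -> v <= - (edgefun e m)%:R - g * (N - m)%:R) ->
  is_min_stab_energy e g v.
Proof.
move=> g0 Hw Ew Hm; split; first by exists phiw.
move=> phi Hs; have [m [mN Hle]] := lower_real g0 Hs.
by apply: le_trans Hle; rewrite lecR; exact: Hm.
Qed.

Lemma phi0_ok : stabilizer_state (phi0 R N) /\
  energy e g (phi0 R N) = (- (edgefun e N)%:R : R)%:C.
Proof.
split; first by split; [exact: phi0_norm|exact: phi0_stab].
by rewrite phi0_energy edgefunN rmorphN rmorph_nat.
Qed.

Lemma phi1_ok : stabilizer_state (phi1 R N) /\
  energy e g (phi1 R N) = (- (g * N%:R) : R)%:C.
Proof.
split; first by split; [exact: phi1_norm|exact: phi1_stab].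
by rewrite phi1_energy rmorphN rmorphM rmorph_nat.
Qed.
End Fin.

Theorem mainTheorem8 (R : realType) (N : nat) (e : rel 'I_N) (g : R) :
  simple_graph e ->
  (0 < N)%N ->
  (forall n : nat, (0 < n)%N -> (n < N)%N ->
     (edgefun e n)%:R / n%:R <= (edgefun e N)%:R / N%:R :> R) ->
  0 <= g ->
  ((exists2 n : nat, (n < N)%N &
      ((edgefun e N)%:R - (edgefun e n)%:R) / (N - n)%:R
        = (edgefun e N)%:R / N%:R :> R) /\
   (forall n : nat, (n < N)%N ->
      (edgefun e N)%:R / N%:R
        <= ((edgefun e N)%:R - (edgefun e n)%:R) / (N - n)%:R :> R)) /\
  (g <= (edgefun e N)%:R / N%:R -> is_min_stab_energy e g (- (edgefun e N)%:R)) /\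
  ((edgefun e N)%:R / N%:R <= g -> is_min_stab_energy e g (- (g * N%:R))).
Proof.
move=> _ N0 H g0.
have Em := @Em_bound _ e R N0 H.
have Npos : 0 < N%:R :> R by rewrite ltr0n.
have Nne : N%:R != 0 :> R by rewrite lt0r_neq0.
set t := (edgefun e N)%:R / N%:R.
have EN : (edgefun e N)%:R = t * N%:R :> R by rewrite /t divfK.
split; [split|split].
- exists 0%N => //; rewrite edgefun0 subr0 subn0 /t; reflexivity.
- move=> n nN.
  have nNR : 0 < (N - n)%:R :> R.
    rewrite ltr0n subn_gt0; exact: nN.
  rewrite ler_pdivlMr // (natrB _ (ltnW nN)).
  rewrite mulrBr -EN lerD2l lerN2 mulrC; exact: Em (ltnW nN).
- move=> gt; have [Hw Ew] := phi0_ok e g.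
  apply: (min_gen g0 Hw Ew) => m mN.
  have h := Em m mN.
  rewrite (natrB _ mN) EN.
  have h2 : g * (N%:R - m%:R) <= t * (N%:R - m%:R).
    apply: ler_wpM2r => //; rewrite subr_ge0 ler_nat; exact: mN.
  have h3 : t * N%:R = m%:R * t + t * (N%:R - m%:R) by ring.
  rewrite h3 opprD; apply: lerD; rewrite lerN2 //.
- move=> gt; have [Hw Ew] := phi1_ok e g.
  apply: (min_gen g0 Hw Ew) => m mN.
  have h := Em m mN.
  rewrite (natrB _ mN).
  have h2 : m%:R * t <= m%:R * g by apply: ler_wpM2l => //; rewrite ler0n.
  have h3 : g * N%:R = m%:R * g + g * (N%:R - m%:R) by ring.
  rewrite h3 opprD; apply: lerD; rewrite lerN2 //; exact: le_trans h h2.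
Qed.
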